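(* For every $n\ge1$, letting $k_n=\lceil\log_2 n\rceil$, $$c_n=2^{k_n-1}\,\mathsf{T}\!\left(\frac{n}{2^{k_n-1}}-1\right),$$ where $\mathsf{T}:[0,1]\to\mathbb{R}$ is the Takagi (Blancmange) function $\mathsf{T}(x)=\sum_{i=0}^{\infty}2^{-i}s(2^i x)$ and $s(x)=\min_{z\in\mathbb{Z}}|x-z|$.
   Context: Bifurcating trees: rooted trees in which every internal node has exactly two children; $\mathcal{T}_n$ is the set of isomorphism classes of bifurcating trees with $n$ leaves. For a node $w$, $\kappa_T(w)$ is its number of descendant leaves. The Colless index is $\mathcal{C}(T)=\sum_{v}|\kappa_T(v_1)-\kappa_T(v_2)|$, summed over internal nodes $v$ with children $v_1,v_2$; $c_n=\min\{\mathcal{C}(T):T\in\mathcal{T}_n\}$. (For $n=1$, $k_n=0$ and the argument of $\mathsf{T}$ is $1$.) *)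

(* Defs.v *)
From Stdlib Require Import Reals ZArith Arith Lia.
Open Scope R_scope.

Inductive btree : Type :=
| Leaf : btree
| Node : btree -> btree -> btree.

Fixpoint leaves (t : btree) : nat :=
  match t with
  | Leaf => 1%nat
  | Node l r => (leaves l + leaves r)%nat
  end.

Fixpoint colless (t : btree) : nat :=
  match t with
  | Leaf => 0%nat
  | Node l r =>
      (colless l + colless r
       + Z.abs_nat (Z.of_nat (leaves l) - Z.of_nat (leaves r)))%nat
  end.

Definition is_min_colless (n c : nat) : Prop :=
  (exists t, leaves t = n /\ colless t = c) /\
  (forall t, leaves t = n -> (c <= colless t)%nat).

(* s(x) = min_{z in Z} |x - z| : distance to the nearest integer
   (Int_part = floor) *)
Definition sdist (x : R) : R :=
  Rmin (x - IZR (Int_part x)) (IZR (Int_part x) + 1 - x).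

Definition takagi_is (x l : R) : Prop :=
  infinite_sum (fun i : nat => / 2 ^ i * sdist (2 ^ i * x)) l.

(* Main.v *)
Require Import Defs.
From Stdlib Require Import Reals ZArith Arith Lia Lra.
Open Scope nat_scope.

Ltac d2 x := pose proof (Nat.div_mod_eq x 2); pose proof (Nat.mod_upper_bound x 2 ltac:(lia)).

Definition dd (j n : nat) : nat := Nat.min (n mod 2^j) (2^j - n mod 2^j).
Fixpoint G (N n : nat) : nat := match N with 0 => 0 | S N' => G N' n + dd (S N') n end.
Definition f n := G (Nat.log2_up n - 1) n.

Lemma dd_key j n : 1 <= j -> dd (S j) n = dd j (n - n/2) + dd j (n/2).
Proof.
  intros Hj. unfold dd.
  assert (HP2 : 2 ^ S j = 2 * 2^j) by (rewrite Nat.pow_succ_r'; lia).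
  assert (HPe : 2 ^ j = 2 * 2 ^ (j-1)) by (replace j with (S (j-1)) at 1 by lia; rewrite Nat.pow_succ_r'; lia).
  assert (HQ : 2 ^ (j-1) <> 0) by (apply Nat.pow_nonzero; lia).
  rewrite HP2. set (P := 2^j) in *. set (Q := 2^(j-1)) in *.
  d2 n. set (b := n/2) in *. set (e := n mod 2) in *.
  pose proof (Nat.div_mod_eq b P). pose proof (Nat.mod_upper_bound b P ltac:(lia)).
  set (q := b / P) in *. set (r := b mod P) in *.
  assert (Hn : n mod (2*P) = 2*r+e).
  { symmetry. apply (Nat.mod_unique _ _ q); lia. }
  rewrite Hn.
  assert (e = 0 \/ e = 1) as [He|He] by lia.
  - replace (n - b) with b by lia. fold r. lia.
  - assert (r + 1 < P \/ r + 1 = P) as [Hr|Hr] by lia.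
    + assert (Hm : (n - b) mod P = r + 1).
      { symmetry. apply (Nat.mod_unique _ _ q); lia. }
      rewrite Hm. lia.
    + assert (Hm : (n - b) mod P = 0).
      { symmetry. apply (Nat.mod_unique _ _ (q+1)); lia. }
      rewrite Hm. lia.
Qed.

Lemma G_rec N n : G (S N) n = n mod 2 + G N (n - n/2) + G N (n/2).
Proof.
  induction N.
  - cbn [G]. unfold dd. rewrite Nat.pow_1_r. d2 n. lia.
  - change (G (S (S N)) n) with (G (S N) n + dd (S (S N)) n).
    rewrite IHN, dd_key by lia. simpl. lia.
Qed.

Lemma dd_pow m : dd m (2^m) = 0.
Proof. unfold dd. rewrite Nat.Div0.mod_same. lia. Qed.

Lemma f_rec n : 2 <= n -> f n = f (n - n/2) + f (n/2) + n mod 2.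
Proof.
  intros Hn.
  destruct (Nat.eq_dec n 2) as [->|Hn2]. { reflexivity. }
  pose proof (Nat.log2_up_spec n ltac:(lia)) as [H1 H2].
  unfold f at 1.
  destruct (Nat.log2_up n) as [|[|m]] eqn:Ek.
  - simpl in *; lia.
  - simpl in *; lia.
  - simpl Nat.pred in H1. rewrite Nat.pow_succ_r' in H1. rewrite !Nat.pow_succ_r' in H2.
    replace (S (S m) - 1) with (S m) by lia. rewrite G_rec.
    assert (HP : 2^m <> 0) by (apply Nat.pow_nonzero; lia).
    d2 n.
    assert (Ha : Nat.log2_up (n - n/2) = S m).
    { apply Nat.log2_up_unique; [lia|]. simpl Nat.pred. rewrite Nat.pow_succ_r'. lia. }
    assert (Hb : f (n/2) = G m (n/2)).
    { assert (n/2 = 2^m \/ 2^m < n/2) as [E|E] by lia.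
      - unfold f. rewrite E, Nat.log2_up_pow2 by lia.
        destruct m as [|m']. reflexivity.
        replace (S m' - 1) with m' by lia. simpl. rewrite dd_pow. lia.
      - unfold f. rewrite (Nat.log2_up_unique (n/2) (S m)). f_equal; lia. lia.
        simpl Nat.pred. rewrite Nat.pow_succ_r'. lia. }
    rewrite Hb. unfold f. rewrite Ha. replace (S m - 1) with m by lia. lia.
Qed.

Lemma f0 : f 0 = 0. Proof. reflexivity. Qed.
Lemma f1 : f 1 = 0. Proof. reflexivity. Qed.

Lemma f_sub : forall s a b, a + b <= s -> 1 <= a -> 1 <= b ->
  f (a+b) <= f a + f b + ((a-b)+(b-a)).
Proof.
  induction s; intros a b Hs Ha Hb; [lia|].
  assert (Hgen : forall a b, a + b <= S s -> b <= a -> 1 <= b ->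
     f (a+b) <= f a + f b + ((a-b)+(b-a))).
  { clear a b Hs Ha Hb. intros a b Hs Hab Hb.
    destruct (Nat.eq_dec a 1) as [->|Ha1].
    { assert (b = 1) by lia. subst. reflexivity. }
    rewrite (f_rec (a+b)) by lia.
    rewrite (f_rec a) by lia.
    d2 a. d2 b. d2 (a+b).
    set (a1 := a - a/2). set (a2 := a/2). set (b1 := b - b/2). set (b2 := b/2).
    assert (Hp : (a1+b2 = a+b - (a+b)/2 /\ a2+b1 = (a+b)/2) \/ (a1+b2 = (a+b)/2 /\ a2+b1 = a+b - (a+b)/2)) by lia.
    assert (K2 : f (a2 + b1) <= f a2 + f b1 + ((a2-b1)+(b1-a2))) by (apply IHs; lia).
    destruct (Nat.eq_dec b 1) as [E|Hb1].
    - assert (Hfb : f b = f b1 + f b2 + b mod 2 - 1).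
      { replace b1 with 1 by lia. replace b2 with 0 by lia. rewrite E. vm_compute. reflexivity. }
      assert (K1 : f (a1 + b2) <= f a1 + f b2).
      { replace b2 with 0 by lia. rewrite Nat.add_0_r, f0. lia. }
      destruct Hp as [[E1 E2]|[E1 E2]]; [rewrite <- E1, <- E2 | rewrite <- E2, <- E1]; lia.
    - assert (Hfb : f b = f b1 + f b2 + b mod 2) by (rewrite (f_rec b) by lia; reflexivity).
      assert (K1 : f (a1 + b2) <= f a1 + f b2 + ((a1-b2)+(b2-a1))) by (apply IHs; lia).
      destruct Hp as [[E1 E2]|[E1 E2]]; [rewrite <- E1, <- E2 | rewrite <- E2, <- E1]; lia. }
  destruct (Nat.le_ge_cases b a).
  - apply Hgen; lia.
  - rewrite Nat.add_comm. specialize (Hgen b a ltac:(lia) H Ha). lia.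
Qed.

Lemma leaves_pos t : 1 <= leaves t.
Proof. induction t; simpl; lia. Qed.

Lemma colless_ge t : f (leaves t) <= colless t.
Proof.
  induction t. simpl. rewrite f1. lia.
  simpl. pose proof (leaves_pos t1). pose proof (leaves_pos t2).
  pose proof (f_sub (leaves t1 + leaves t2) (leaves t1) (leaves t2) (le_n _) H H0). lia.
Qed.

Lemma exists_tree : forall s n, n <= s -> 1 <= n -> exists t, leaves t = n /\ colless t = f n.
Proof.
  induction s; intros n Hs Hn. lia.
  destruct (Nat.eq_dec n 1) as [->|Hn1]. exists Leaf. split; reflexivity.
  d2 n.
  destruct (IHs (n - n/2)) as [ta [Ha1 Ha2]]; try lia.
  destruct (IHs (n/2)) as [tb [Hb1 Hb2]]; try lia.
  exists (Node ta tb). simpl. rewrite Ha1, Hb1, Ha2, Hb2, (f_rec n) by lia. split. lia. lia.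
Qed.

Open Scope R_scope.
Lemma INR_pow2 j : INR (2^j) = 2^j.
Proof. rewrite pow_INR. reflexivity. Qed.

Lemma sdist_shift y m : sdist (y - INR m) = sdist y.
Proof.
  unfold sdist.
  assert (E : Int_part (y - INR m) = (Int_part y - Z.of_nat m)%Z).
  { symmetry. apply Int_part_spec. rewrite minus_IZR, <- INR_IZR_INZ.
    pose proof (base_Int_part y). lra. }
  rewrite E, minus_IZR, <- INR_IZR_INZ. f_equal; ring.
Qed.

Lemma sdist_INR m : sdist (INR m) = 0.
Proof.
  unfold sdist. rewrite Int_part_INR, <- INR_IZR_INZ.
  unfold Rmin. destruct (Rle_dec _ _); lra.
Qed.

Lemma sdist_dd j n : 2^j * sdist (INR n / 2^j) = INR (dd j n).
Proof.
  unfold dd. rewrite <- INR_pow2.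
  set (P := (2^j)%nat).
  assert (HP : (P <> 0)%nat) by (apply Nat.pow_nonzero; lia).
  pose proof (Nat.div_mod_eq n P). pose proof (Nat.mod_upper_bound n P HP).
  set (q := (n / P)%nat) in *. set (r := (n mod P)%nat) in *.
  assert (HPr : 0 < INR P) by (apply lt_0_INR; lia).
  assert (Hr : INR r < INR P) by (apply lt_INR; lia).
  assert (Hr0 : 0 <= INR r) by apply pos_INR.
  assert (Ex : INR n / INR P = INR q + INR r / INR P).
  { rewrite H, plus_INR, mult_INR. field. lra. }
  assert (Ei : Int_part (INR n / INR P) = Z.of_nat q).
  { symmetry. apply Int_part_spec. rewrite <- INR_IZR_INZ, Ex.
    assert (0 <= INR r / INR P < 1).
    { split. apply Rmult_le_pos; [lra| left; apply Rinv_0_lt_compat; lra]. apply (Rmult_lt_reg_r (INR P)); [lra|]. unfold Rdiv; rewrite Rmult_assoc, Rinv_l by lra; lra. }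
    lra. }
  unfold sdist. rewrite Ei, <- INR_IZR_INZ, Ex.
  replace (INR q + INR r / INR P - INR q) with (INR r / INR P) by ring.
  replace (INR q + 1 - (INR q + INR r / INR P)) with ((INR P - INR r) / INR P) by (field; lra).
  destruct (Nat.min_spec r (P - r)) as [[H1 H2]|[H1 H2]]; rewrite H2;
  [| rewrite minus_INR by lia];
  unfold Rmin; destruct (Rle_dec _ _) as [Hd|Hd].
  - field; lra.
  - exfalso. apply Hd. unfold Rdiv. apply Rmult_le_compat_r.
    left; apply Rinv_0_lt_compat; lra. apply lt_INR in H1. rewrite minus_INR in H1 by lia. lra.
  - assert (Hx : INR (P - r) <= INR r) by (apply le_INR; lia). rewrite minus_INR in Hx by lia.
    assert (Hy : INR r / INR P <= (INR P - INR r) / INR P) by exact Hd.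
    apply Rmult_le_compat_r with (r := INR P) in Hy; [|lra].
    unfold Rdiv in Hy. rewrite !Rmult_assoc, Rinv_l in Hy by lra.
    field_simplify; lra.
  - field; lra.
Qed.

Lemma sum_term n K :
  2^K * sum_f_R0 (fun i => / 2^i * sdist (2^i * (INR n / 2^K))) K = INR (G K n).
Proof.
  induction K.
  - simpl. replace (1 * (INR n / 1)) with (INR n) by field. rewrite sdist_INR. ring.
  - rewrite decomp_sum by lia. simpl Nat.pred.
    rewrite (sum_eq _ (fun i => (/ 2 ^ i * sdist (2 ^ i * (INR n / 2 ^ K))) * / 2)).
    2:{ intros i _. replace (2 ^ S i * (INR n / 2 ^ S K)) with (2 ^ i * (INR n / 2 ^ K)).
        simpl; field; repeat split; try (apply pow_nonzero); lra.
        simpl. field. apply pow_nonzero; lra. }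
    rewrite <- scal_sum.
    cbn [G]. rewrite plus_INR, <- IHK, <- sdist_dd.
    replace (2 ^ 0 * (INR n / 2 ^ S K)) with (INR n / 2 ^ S K) by (simpl; ring). rewrite pow_O, Rinv_1. simpl (2 ^ S K). field.
Qed.

Lemma tail_sum s M : (forall i, (M < i)%nat -> s i = 0) -> infinite_sum s (sum_f_R0 s M).
Proof.
  intros Hs eps He. exists M. intros m Hm.
  replace m with (M + (m - M))%nat by lia.
  assert (E : forall d, sum_f_R0 s (M + d) = sum_f_R0 s M).
  { induction d. rewrite Nat.add_0_r; reflexivity.
    replace (M + S d)%nat with (S (M + d)) by lia. simpl. rewrite IHd, Hs by lia. ring. }
  rewrite E, Rdist_eq. lra.
Qed.

Theorem corollary4 (n : nat) (hn : (1 <= n)%nat) :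
  exists c : nat, is_min_colless n c /\
    exists T : R,
      takagi_is (INR n / powerRZ 2 (Z.of_nat (Nat.log2_up n) - 1) - 1) T /\
      INR c = powerRZ 2 (Z.of_nat (Nat.log2_up n) - 1) * T.
Proof.
  exists (f n). split.
  { split. destruct (exists_tree n n (le_n _) hn) as [t Ht]. exists t; exact Ht.
    intros t Ht. rewrite <- Ht. apply colless_ge. }
  destruct (Nat.eq_dec n 1) as [->|Hn1].
  { exists 0. rewrite f1. split; [|simpl; ring].
    replace (Nat.log2_up 1) with 0%nat by reflexivity.
    replace (INR 1 / powerRZ 2 (Z.of_nat 0 - 1) - 1) with (INR 1) by (simpl; field).
    replace 0 with (sum_f_R0 (fun i => / 2 ^ i * sdist (2 ^ i * INR 1)) 0).
    apply tail_sum. intros i _. rewrite <- INR_pow2, <- mult_INR, sdist_INR. ring.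
    cbn [sum_f_R0]. rewrite pow_O, Rinv_1, !Rmult_1_l, sdist_INR. reflexivity. }
  assert (Hk : (1 <= Nat.log2_up n)%nat).
  { pose proof (Nat.log2_up_spec n ltac:(lia)) as [H1 H2].
    destruct (Nat.log2_up n); simpl in *; lia. }
  set (K := (Nat.log2_up n - 1)%nat).
  assert (EP : powerRZ 2 (Z.of_nat (Nat.log2_up n) - 1) = 2 ^ K).
  { rewrite pow_powerRZ. f_equal. unfold K. lia. }
  rewrite EP.
  assert (Et : forall i, / 2 ^ i * sdist (2 ^ i * (INR n / 2 ^ K - 1)) =
                         / 2 ^ i * sdist (2 ^ i * (INR n / 2 ^ K))).
  { intros i. f_equal. rewrite <- (sdist_shift (2 ^ i * (INR n / 2 ^ K)) (2^i)), INR_pow2. f_equal. ring. }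
  exists (sum_f_R0 (fun i => / 2 ^ i * sdist (2 ^ i * (INR n / 2 ^ K - 1))) K).
  split.
  - apply tail_sum. intros i Hi. rewrite Et.
    replace (2 ^ i * (INR n / 2 ^ K)) with (INR (n * 2 ^ (i - K))).
    rewrite sdist_INR. ring.
    rewrite mult_INR, INR_pow2. assert (E2 : 2 ^ i = 2 ^ (i - K) * 2 ^ K) by (rewrite <- pow_add; f_equal; lia). rewrite E2.
    field. apply pow_nonzero; lra.
  - rewrite (sum_eq _ _ _ (fun i _ => Et i)). rewrite sum_term. reflexivity.
Qed.
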